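(* Let $r$ be a fixed positive integer, $n\ge3$, and let $V$ be a symmetric $n\times n$ matrix in $\mathcal L_n(1/b_n,1/c_n)$ with $b_n\ge c_n>0$. Let $S=\mathrm{diag}(1/v_{11},\dots,1/v_{nn})$, $W=V^{-1}-S$, and let $W_{22}$ be the bottom-right $(n-r)\times(n-r)$ block of $W$. Let $V_{22}$ be the bottom-right $(n-r)\times(n-r)$ block of $V$, $S_{22}=\mathrm{diag}(1/v_{r+1,r+1},\dots,1/v_{nn})$ and $\widetilde W_{22}=V_{22}^{-1}-S_{22}$. Then there is a constant $C$ depending only on $r$ such that for all sufficiently large $n$, $$\|W_{22}-\widetilde W_{22}\|_{\max}\le C\frac{b_n^6}{n^3c_n^5}.$$
   Context: For $m,M>0$, $\mathcal L_n(m,M)$ is the class of $n\times n$ matrices $V=(v_{ij})$ with $v_{ii}=\sum_{j\ne i}v_{ij}$ for $i=1,\dots,n$ and $m\le v_{ij}\le M$ for all $i\ne j$. $\|J\|_{\max}=\max_{i,j}|J_{ij}|$. *)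

(* Defs.v *)
From HB Require Import structures.
From mathcomp Require Import all_boot all_order all_algebra.
Set Implicit Arguments. Unset Strict Implicit. Unset Printing Implicit Defensive.
Import Order.TTheory GRing.Theory Num.Theory.
Local Open Scope ring_scope.

Definition inL (R : realFieldType) (n : nat) (m M : R) (V : 'M[R]_n) : Prop :=
  (forall i : 'I_n, V i i = \sum_(j < n | j != i) V i j) /\
  (forall i j : 'I_n, i != j -> m <= V i j <= M).

Definition maxnorm (R : realFieldType) (p q : nat) (J : 'M[R]_(p, q)) : R :=
  \big[Num.max/0]_(i < p) \big[Num.max/0]_(j < q) `|J i j|.

(* index i of the bottom-right (n-r)x(n-r) block, seen as index r+i of 'I_n *)
Definition shift_ord (r n : nat) (i : 'I_(n - r)) : 'I_n :=
  Ordinal (eq_ind _ is_true (ltn_ord i) _ (ltn_subRL r i n)).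
Arguments shift_ord : clear implicits.

Definition br_block (R : Type) (r n : nat) (A : 'M[R]_n) : 'M[R]_(n - r) :=
  \matrix_(i, j) A (shift_ord r n i) (shift_ord r n j).

Definition invdiag (R : realFieldType) (n : nat) (A : 'M[R]_n) : 'M[R]_n :=
  diag_mx (\row_i (A i i)^-1).

(* Main.v *)
Require Import Defs.
From HB Require Import structures.
From mathcomp Require Import all_boot all_order all_algebra.
From mathcomp Require Import ring lra zify.
Import Order.TTheory GRing.Theory Num.Theory.
Set Implicit Arguments. Unset Strict Implicit.
Local Open Scope ring_scope.
Lemma dsum_mul (R : comRingType) (I J : finType) (P : pred I) (Q : pred J) (f : I -> R) (g : J -> R) :
  \sum_(i | P i) \sum_(j | Q j) f i * g j = (\sum_(i | P i) f i) * (\sum_(j | Q j) g j).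
Proof. rewrite mulr_suml; apply: eq_bigr => i _; by rewrite mulr_sumr. Qed.

Lemma cs_w (R : realFieldType) (I : finType) (P : pred I) (w t : I -> R) :
  (forall i, P i -> 0 <= w i) ->
  (\sum_(i | P i) w i * t i) ^+ 2 <= (\sum_(i | P i) w i) * \sum_(i | P i) w i * t i ^+ 2.
Proof.
move=> hw.
have H0 : 0 <= \sum_(i | P i) \sum_(j | P j) w i * w j * (t i - t j) ^+ 2.
  apply: sumr_ge0 => i Pi; apply: sumr_ge0 => j Pj.
  by rewrite mulr_ge0 ?sqr_ge0 // mulr_ge0 // hw.
have E : \sum_(i | P i) \sum_(j | P j) w i * w j * (t i - t j) ^+ 2 =
  \sum_(i | P i) \sum_(j | P j) (w i * t i ^+ 2) * w j
  + \sum_(i | P i) \sum_(j | P j) w i * (w j * t j ^+ 2)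
  - 2 * \sum_(i | P i) \sum_(j | P j) (w i * t i) * (w j * t j).
  rewrite mulr_sumr -big_split -sumrB; apply: eq_bigr => i _.
  rewrite mulr_sumr -big_split -sumrB; apply: eq_bigr => j _ /=; ring.
rewrite E !dsum_mul in H0.
rewrite expr2; lra.
Qed.
Lemma sum_neq_const (R : realFieldType) n (i : 'I_n) (c : R) :
  \sum_(j | j != i) c = (n%:R - 1) * c.
Proof.
have -> : \sum_(j | j != i) c = \sum_(j in predC1 i) c by apply: eq_bigl.
rewrite sumr_const cardC1 card_ord -mulr_natl.
case: n i => [[] //|n i] /=; by rewrite mulr1 -natr1 addrK mulr_natl.
Qed.

Definition qf (R : realFieldType) n (V : 'M[R]_n) (y : 'I_n -> R) :=
  \sum_i y i * \sum_j V i j * y j.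

Lemma F1 (R : realFieldType) n (V : 'M[R]_n) (y : 'I_n -> R) i :
  (V i i = \sum_(j | j != i) V i j) ->
  \sum_j V i j * y j = \sum_(j | j != i) V i j * (y i + y j).
Proof.
move=> hd; rewrite (bigD1 i) //= hd mulr_suml -big_split /=.
by apply: eq_bigr => j _; rewrite mulrDr.
Qed.

Lemma F2 (R : realFieldType) n (V : 'M[R]_n) (y : 'I_n -> R) :
  (forall i j, V i j = V j i) ->
  (forall i, V i i = \sum_(j | j != i) V i j) ->
  2 * qf V y = \sum_i \sum_(j | j != i) V i j * (y i + y j) ^+ 2.
Proof.
move=> hs hd.
have A : qf V y = \sum_i \sum_(j | j != i) V i j * (y i * (y i + y j)).
  apply: eq_bigr => i _; rewrite F1 // mulr_sumr; apply: eq_bigr => j _; ring.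
have B : qf V y = \sum_i \sum_(j | j != i) V i j * (y j * (y i + y j)).
  rewrite A (exchange_big_dep xpredT) //=; apply: eq_bigr => j _.
  rewrite (eq_bigl (fun i => i != j)); last by move=> i; rewrite eq_sym.
  by apply: eq_bigr => i _; rewrite hs; ring.
have -> : 2 * qf V y = qf V y + qf V y by ring.
rewrite {1}A B -big_split; apply: eq_bigr => i _ /=.
rewrite -big_split; apply: eq_bigr => j _ /=; ring.
Qed.

Lemma Vii_bounds (R : realFieldType) n (V : 'M[R]_n) (a bb : R) i :
  (V i i = \sum_(j | j != i) V i j) ->
  (forall i j, i != j -> a <= V i j <= bb) ->
  (n%:R - 1) * a <= V i i <= (n%:R - 1) * bb.
Proof.
move=> hd hab; rewrite hd -!(sum_neq_const i); apply/andP; split; apply: ler_sum => j hj;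
  have /andP[h1 h2] : a <= V i j <= bb by apply: hab; rewrite eq_sym.
  all: done.
Qed.


Lemma sum_offdiag (R : realFieldType) n (f : 'I_n -> 'I_n -> R) :
  \sum_i \sum_(j | j != i) f i j = \sum_i \sum_j f i j - \sum_i f i i.
Proof.
rewrite -sumrB; apply: eq_bigr => i _; by rewrite [X in _ = X - _](bigD1 i) //= (addrC (f i i)) addrK.
Qed.

Lemma F3 (R : realFieldType) n (V : 'M[R]_n) (a bb : R) (y : 'I_n -> R) :
  0 <= a ->
  (forall i j, V i j = V j i) ->
  (forall i, V i i = \sum_(j | j != i) V i j) ->
  (forall i j, i != j -> a <= V i j <= bb) ->
  a * (n%:R - 2) * \sum_i y i ^+ 2 <= qf V y.
Proof.
move=> a0 hs hd hab.
have h2 := F2 y hs hd.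
have hT : a * \sum_i \sum_(j | j != i) (y i + y j) ^+ 2 <= 2 * qf V y.
  rewrite h2 mulr_sumr; apply: ler_sum => i _; rewrite mulr_sumr; apply: ler_sum => j hj.
  have /andP[h3 _] : a <= V i j <= bb by apply: hab; rewrite eq_sym.
  by apply: ler_wpM2r => //; rewrite sqr_ge0.
have E : \sum_i \sum_(j | j != i) (y i + y j) ^+ 2 =
   (2 * n%:R - 4) * \sum_i y i ^+ 2 + 2 * (\sum_i y i) ^+ 2.
  rewrite sum_offdiag.
  have -> : \sum_(i < n) \sum_(j < n) (y i + y j) ^+ 2 =
     \sum_(i < n) \sum_(j < n) (y i ^+ 2 * 1) + \sum_(i < n) \sum_(j < n) (1 * y j ^+ 2)
      + 2 * \sum_(i < n) \sum_(j < n) (y i * y j).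
    rewrite mulr_sumr -!big_split; apply: eq_bigr => i _ /=.
    rewrite mulr_sumr -!big_split; apply: eq_bigr => j _ /=; ring.
  rewrite !dsum_mul sumr_const card_ord.
  have -> : \sum_(i < n) (y i + y i) ^+ 2 = 4 * \sum_(i < n) y i ^+ 2.
    rewrite mulr_sumr; apply: eq_bigr => i _; ring.
  rewrite -mulr_natl expr2; ring.
rewrite E in hT.
have : 0 <= a * (2 * (\sum_i y i) ^+ 2) by rewrite mulr_ge0 // mulr_ge0 // sqr_ge0.
move: hT; set S2 := \sum_i y i ^+ 2; set S1 := (\sum_i y i) ^+ 2; set q := qf V y.
move=> hT h0.
have -> : a * (n%:R - 2) * S2 = (a * ((2 * n%:R - 4) * S2 + 2 * S1) - a * (2 * S1)) / 2 by field.
rewrite ler_pdivrMr //; lra.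
Qed.

Lemma F4 (R : realFieldType) n (V : 'M[R]_n) (a bb : R) (z : 'I_n -> R) :
  0 <= a ->
  (forall i j, V i j = V j i) ->
  (forall i, V i i = \sum_(j | j != i) V i j) ->
  (forall i j, i != j -> a <= V i j <= bb) ->
  \sum_i (\sum_j V i j * z j) ^+ 2 <= 2 * ((n%:R - 1) * bb) * qf V z.
Proof.
move=> a0 hs hd hab.
rewrite -mulrA mulrCA F2 // mulr_sumr; apply: ler_sum => i _.
rewrite F1 //.
have hw : forall j, j != i -> 0 <= V i j.
  move=> j hj; have /andP[h3 _] : a <= V i j <= bb by apply: hab; rewrite eq_sym.
  exact: le_trans a0 h3.
apply: le_trans (@cs_w _ _ (fun j => j != i) _ (fun j => z i + z j) hw) _.
apply: ler_wpM2r; first by apply: sumr_ge0 => j hj; rewrite mulr_ge0 ?sqr_ge0 ?hw.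
rewrite -hd; by case/andP: (Vii_bounds (hd i) hab).
Qed.
Lemma prod_le (R : realFieldType) (p u wb L2 : R) :
  `|p| <= wb -> `|u| <= L2 -> p * u <= wb * L2.
Proof.
move=> hp hu; apply: le_trans (ler_norm _) _; rewrite normrM.
by apply: ler_pM => //; apply: normr_ge0.
Qed.

Lemma spread (R : realFieldType) n (x : 'I_n -> R) (w : 'I_n -> 'I_n -> R) (k : 'I_n)
  (L rho wb : R) :
  (3 <= n)%N -> 0 <= rho ->
  (forall i, i != k -> x i = - \sum_(j | j != i) w i j * x j) ->
  (forall i, \sum_(j | j != i) w i j = 1) ->
  (forall i j, i != j -> rho <= w i j <= wb) ->
  (forall l, - L <= x l <= L) ->
  forall i, i != k -> ((n%:R - 3) * rho) * `|x i| <= wb * L * ((n%:R - 3) * rho + 1).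
Proof.
move=> n3 rho0 heq hw1 hwb hx.
have [i0 hi0] : exists i0, i0 != k.
  have : (0 < #|predC1 k|)%N by rewrite cardC1 card_ord; lia.
  by case/card_gt0P => j hj; exists j.
case: (@arg_maxP _ _ _ i0 (fun j => j != k) x hi0) => imax hxk hmax.
case: (@arg_minP _ _ _ i0 (fun j => j != k) x hi0) => imin hnk hmin.
set M := x imax; set m := x imin; set D := M - m.
pose u j := x j - m.
have hu : forall j, j != k -> 0 <= u j <= D.
  move=> j hj; have h1 := hmax j hj; have h2 := hmin j hj; rewrite /u /D /M /m.
  move: h1 h2 => /= h1 h2; apply/andP; split; lra.
have huk : - (2 * L) <= u k <= 2 * L.
  have := hx k; have := hx imin; rewrite /u /m => /andP[h1 h2] /andP[h3 h4].
  apply/andP; split; lra.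
have htr : forall i, i != k -> x i + m = - (w i k * u k + \sum_(j | (j != i) && (j != k)) w i j * u j).
  move=> i hi.
  have -> : w i k * u k + \sum_(j | (j != i) && (j != k)) w i j * u j =
            \sum_(j | j != i) w i j * u j by rewrite [RHS](bigD1 k) // eq_sym.
  have : \sum_(j | j != i) w i j * u j = \sum_(j | j != i) w i j * x j - m.
    rewrite /u; under eq_bigr do rewrite mulrBr.
    by rewrite sumrB -mulr_suml hw1 mul1r.
  move=> ->; rewrite (heq i hi); lra.
have hwk : forall i, i != k -> \sum_(j | (j != i) && (j != k)) w i j = 1 - w i k.
  move=> i hi; rewrite -(hw1 i) [X in _ = X - _](bigD1 k) 1?eq_sym //=; lra.
have hrk : forall i, i != k -> \sum_(j | (j != i) && (j != k)) rho = (n%:R - 2) * rho.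
  move=> i hi; have h := sum_neq_const i rho; rewrite (bigD1 k) 1?eq_sym //= in h; lra.
set Ap := \sum_(j | (j != imax) && (j != k)) w imax j * u j.
set Bp := \sum_(j | (j != imin) && (j != k)) w imin j * u j.
set Sa := \sum_(j | (j != imax) && (j != k)) u j.
set Sb := \sum_(j | (j != imin) && (j != k)) u j.
have E1 := htr _ hxk; have E2 := htr _ hnk.
rewrite -/M in E1; rewrite -/m -/Bp in E2; rewrite -/Ap in E1.
have hA0 : rho * Sa <= Ap.
  rewrite /Sa /Ap mulr_sumr; apply: ler_sum => j /andP[hjm hj].
  have /andP[h1 _] : rho <= w imax j <= wb by apply: hwb; rewrite eq_sym.
  by apply: ler_wpM2r => //; case/andP: (hu j hj).
have hB0 : Bp <= (1 - w imin k - (n%:R - 2) * rho) * D + rho * Sb.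
  rewrite -(hwk _ hnk) -(hrk _ hnk) -sumrB mulr_suml /Sb mulr_sumr -big_split /=.
  apply: ler_sum => j /andP[hjm hj].
  have /andP[h1 h2] : rho <= w imin j <= wb by apply: hwb; rewrite eq_sym.
  have /andP[h3 h4] := hu j hj.
  have : (w imin j - rho) * u j <= (w imin j - rho) * D by apply: ler_wpM2l; lra.
  lra.
have hB1 : Bp <= (1 - w imin k) * D.
  rewrite -(hwk _ hnk) /Bp mulr_suml; apply: ler_sum => j /andP[hjm hj].
  have /andP[h1 h2] : rho <= w imin j <= wb by apply: hwb; rewrite eq_sym.
  have /andP[h3 h4] := hu j hj.
  by apply: ler_wpM2l => //; lra.
have hA1 : 0 <= Ap.
  apply: sumr_ge0 => j /andP[hjm hj].
  have /andP[h1 h2] : rho <= w imax j <= wb by apply: hwb; rewrite eq_sym.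
  have /andP[h3 h4] := hu j hj.
  apply: mulr_ge0 => //; lra.
have hS : Sb - Sa = D.
  have e1 : \sum_(j | j != k) u j = u imin + Sb.
    rewrite (bigD1 imin) //=; congr (_ + _); apply: eq_bigl => j; by rewrite andbC.
  have e2 : \sum_(j | j != k) u j = u imax + Sa.
    rewrite (bigD1 imax) //=; congr (_ + _); apply: eq_bigl => j; by rewrite andbC.
  have : u imax - u imin = D by rewrite /u /D /M /m subrr subr0.
  lra.
have hwkb : forall i, i != k -> 0 <= w i k <= wb.
  move=> i hi; have /andP[h1 h2] : rho <= w i k <= wb by apply: hwb.
  apply/andP; split; lra.
have hnorm : `|u k| <= 2 * L by rewrite ler_norml.
have T1 : (w imin k - w imax k) * u k <= wb * (2 * L).
  apply: prod_le => //; rewrite ler_norml.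
  have := hwkb _ hxk; have := hwkb _ hnk; move=> /andP[? ?] /andP[? ?]; apply/andP; split; lra.
have T3 : - (w imax k * u k) <= wb * (2 * L).
  rewrite -mulNr; apply: prod_le => //; rewrite normrN ler_norml.
  have := hwkb _ hxk; move=> /andP[? ?]; apply/andP; split; lra.
have T4 : w imin k * u k <= wb * (2 * L).
  apply: prod_le => //; rewrite ler_norml.
  have := hwkb _ hnk; move=> /andP[? ?]; apply/andP; split; lra.
have eD : D = M - m by [].
have D0 : 0 <= D by case/andP: (hu _ hxk) => ? ?; lra.
have T2 : 0 <= w imin k * D by apply: mulr_ge0 => //; case/andP: (hwkb _ hnk).
have hsp : (n%:R - 3) * rho * D <= wb * (2 * L).
  have e : D = (M + m) - (m + m) by rewrite /D; ring.
  have : (n%:R - 3) * rho * D = (n%:R - 2) * rho * D - rho * D by ring.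
  have : (1 - w imin k - (n%:R - 2) * rho) * D = D - w imin k * D - (n%:R - 2) * rho * D by ring.
  have : rho * Sb - rho * Sa = rho * D by rewrite -mulrBr hS.
  lra.
have hMm : `|M + m| <= wb * (2 * L).
  rewrite ler_norml; apply/andP; split; last by lra.
  have : (1 - w imin k) * D = D - w imin k * D by ring.
  lra.
move=> i hi.
have hxi : 2 * `|x i| <= D + wb * (2 * L).
  have h1 := hmax i hi; have h2 := hmin i hi; move: h1 h2 => /= h1 h2.
  rewrite -/M -/m in h1 h2.
  have := hMm; rewrite ler_norml => /andP[? ?].
  case: (lerP 0 (x i)) => hs.
    rewrite ger0_norm //; rewrite /D; lra.
  rewrite ltr0_norm //; rewrite /D; lra.
have q0 : 0 <= (n%:R - 3) * rho.
  apply: mulr_ge0 => //; rewrite subr_ge0 (ler_nat _ 3 n) //.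
have := ler_wpM2l q0 hxi.
lra.
Qed.
Lemma posdef (R : realFieldType) n (V : 'M[R]_n) (a bb : R) (y : 'I_n -> R) :
  0 < a -> (3 <= n)%N ->
  (forall i j, V i j = V j i) ->
  (forall i, V i i = \sum_(j | j != i) V i j) ->
  (forall i j, i != j -> a <= V i j <= bb) ->
  qf V y <= 0 -> forall j, y j = 0.
Proof.
move=> a0 n3 hs hd hab hq.
have h := F3 y (ltW a0) hs hd hab.
have c0 : 0 < a * (n%:R - 2).
  apply: mulr_gt0 => //; rewrite subr_gt0 (ltr_nat _ 2 n) //.
have S0 : \sum_i y i ^+ 2 = 0.
  apply/eqP; rewrite eq_le sumr_ge0 ?andbT => [|i _]; last exact: sqr_ge0.
  rewrite -(pmulr_rle0 _ c0); exact: le_trans h hq.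
move=> j; apply/eqP; rewrite -sqrf_eq0; apply/eqP.
by apply: (psumr_eq0P _ S0) => // i _; apply: sqr_ge0.
Qed.

Lemma unitV (R : realFieldType) n (V : 'M[R]_n) (a bb : R) :
  0 < a -> (3 <= n)%N ->
  (forall i j, V i j = V j i) ->
  (forall i, V i i = \sum_(j | j != i) V i j) ->
  (forall i j, i != j -> a <= V i j <= bb) ->
  V \in unitmx.
Proof.
move=> a0 n3 hs hd hab.
rewrite unitmxE unitfE; apply/det0P => -[v vn0 hv].
move/negP: vn0; apply; apply/eqP/matrixP => i j; rewrite [RHS]mxE.
rewrite [i]ord1.
have hq : qf V (fun j => v ord0 j) <= 0.
  rewrite /qf big1 // => k _.
  have := congr1 (fun M : 'M[R]_(1,n) => M ord0 k) hv; rewrite !mxE => e.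
  have -> : \sum_j V k j * v ord0 j = 0.
    apply: etrans e; apply: eq_bigr => l _; by rewrite hs mulrC.
  by rewrite mulr0.
exact: (posdef a0 n3 hs hd hab hq).
Qed.

Lemma VP (R : realFieldType) n (V : 'M[R]_n) i k :
  V \in unitmx -> \sum_j V i j * invmx V j k = (i == k)%:R.
Proof. move=> u; have := congr1 (fun M : 'M[R]_n => M i k) (mulmxV u); by rewrite !mxE. Qed.

Lemma PV (R : realFieldType) n (V : 'M[R]_n) i k :
  V \in unitmx -> \sum_j invmx V i j * V j k = (i == k)%:R.
Proof. move=> u; have := congr1 (fun M : 'M[R]_n => M i k) (mulVmx u); by rewrite !mxE. Qed.

Lemma Psym (R : realFieldType) n (V : 'M[R]_n) i k :
  V^T = V -> invmx V i k = invmx V k i.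
Proof. move=> hT; by rewrite -{1}hT -trmx_inv mxE. Qed.

Lemma sum_delta (R : realFieldType) (I : finType) (a : I) (F : I -> R) :
  \sum_k (a == k)%:R * F k = F a.
Proof.
rewrite (bigD1 a) //= eqxx mul1r big1 ?addr0 // => k hk.
by rewrite eq_sym (negbTE hk) mul0r.
Qed.

Lemma entry_bound (R : realFieldType) n (V : 'M[R]_n) (a bb : R) :
  0 < a -> (3 <= n)%N ->
  (forall i j, V i j = V j i) ->
  (forall i, V i i = \sum_(j | j != i) V i j) ->
  (forall i j, i != j -> a <= V i j <= bb) ->
  forall l k, - (a * (n%:R - 2))^-1 <= invmx V l k <= (a * (n%:R - 2))^-1.
Proof.
move=> a0 n3 hs hd hab l k.
have u := unitV a0 n3 hs hd hab.
set x := fun j => invmx V j k.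
have hq : qf V x = x k.
  rewrite /qf (eq_bigr (fun i => x i * (i == k)%:R)); last by move=> i _; rewrite VP.
  rewrite (bigD1 k) //= eqxx mulr1 big1 ?addr0 // => i hi; by rewrite (negbTE hi) mulr0.
have h := F3 x (ltW a0) hs hd hab; rewrite hq in h.
set c := a * (n%:R - 2) in h *.
have c0 : 0 < c by apply: mulr_gt0 => //; rewrite subr_gt0 (ltr_nat _ 2 n) //.
have hx : forall j, x j ^+ 2 <= \sum_i x i ^+ 2.
  move=> j; rewrite (bigD1 j) //= lerDl; apply: sumr_ge0 => i _; exact: sqr_ge0.
have xk0 : 0 <= x k by apply: le_trans h; apply: mulr_ge0 (ltW c0) (sumr_ge0 _ _) => i _; exact: sqr_ge0.
have hk : c * x k <= 1.
  have h2 : c * x k ^+ 2 <= x k := le_trans (ler_wpM2l (ltW c0) (hx k)) h.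
  case: (ltrP 0 (x k)) => xk.
    nra.
  have -> : x k = 0 by apply/eqP; rewrite eq_le xk xk0.
  by rewrite mulr0.
have hl : c * x l ^+ 2 <= c^-1.
  apply: le_trans (ler_wpM2l (ltW c0) (hx l)) _; apply: le_trans h _.
  by rewrite -[c^-1]mulr1 ler_pdivlMl.
have hl2 : x l ^+ 2 <= c^-1 ^+ 2.
  by rewrite [c^-1 ^+ 2]expr2 ler_pdivlMl.
have ci0 : 0 <= c^-1 by rewrite invr_ge0 ltW.
change (invmx V l k) with (x l); move: hl2 ci0; move: (c^-1) (x l) => L y hl2 ci0; apply/andP; split; nra.
Qed.

Lemma offdiag_bound0 (R : realFieldType) n (V : 'M[R]_n) (a bb : R) :
  0 < a -> a <= bb -> (3 <= n)%N ->
  (forall i j, V i j = V j i) ->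
  (forall i, V i i = \sum_(j | j != i) V i j) ->
  (forall i j, i != j -> a <= V i j <= bb) ->
  forall k i, i != k ->
  ((n%:R - 3) * (a / ((n%:R - 1) * bb))) * `|invmx V i k|
   <= bb / ((n%:R - 1) * a) * (a * (n%:R - 2))^-1 * ((n%:R - 3) * (a / ((n%:R - 1) * bb)) + 1).
Proof.
move=> a0 ab n3 hs hd hab k.
have u := unitV a0 n3 hs hd hab.
have n1 : 0 < n%:R - 1 :> R by rewrite subr_gt0 (ltr_nat _ 1 n); lia.
have b0 : 0 < bb by apply: lt_le_trans ab.
have Vii : forall i, 0 < V i i /\ (n%:R - 1) * a <= V i i <= (n%:R - 1) * bb.
  move=> i; have h := Vii_bounds (hd i) hab; split => //.
  case/andP: h => h _; apply: lt_le_trans h; exact: mulr_gt0.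
apply: (@spread R n (fun l => invmx V l k) (fun i j => V i j / V i i) k).
- exact: n3.
- by apply: divr_ge0; [exact: ltW | apply: mulr_ge0; exact: ltW].
- move=> i hik /=.
  have e := VP i k u; rewrite (negbTE hik) (bigD1 i) //= in e.
  have [vp _] := Vii i.
  have -> : \sum_(j | j != i) V i j / V i i * invmx V j k
      = (\sum_(j | j != i) V i j * invmx V j k) / V i i.
    by rewrite mulr_suml; apply: eq_bigr => j _; rewrite mulrAC.
  have -> : \sum_(j | j != i) V i j * invmx V j k = - (V i i * invmx V i k) by lra.
  by rewrite mulNr opprK mulrC mulKf // lt0r_neq0.
- move=> i /=; have [vp _] := Vii i.
  by rewrite -mulr_suml -hd divff // lt0r_neq0.
- move=> i j hij /=; have [vp /andP[v1 v2]] := Vii i.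
  have /andP[h1 h2] := hab i j hij.
  apply/andP; split.
    rewrite ler_pdivlMr // mulrAC ler_pdivrMr; last exact: mulr_gt0.
    by apply: ler_pM; [exact: ltW | exact: ltW | done | done].
  rewrite ler_pdivrMr // mulrAC ler_pdivlMr; last exact: mulr_gt0.
  apply: ler_pM; [apply: ltW; exact: lt_le_trans h1 | apply: mulr_ge0; exact: ltW | exact: h2 | exact: v1].
- move=> l; exact: (entry_bound a0 n3 hs hd hab).
Qed.

Lemma offdiag_bound (R : realFieldType) n (V : 'M[R]_n) (a bb : R) :
  0 < a -> a <= bb -> (4 <= n)%N ->
  (forall i j, V i j = V j i) ->
  (forall i, V i i = \sum_(j | j != i) V i j) ->
  (forall i j, i != j -> a <= V i j <= bb) ->
  forall k i, i != k ->
  `|invmx V i k| <= 2 * bb ^+ 2 / (a ^+ 3 * ((n%:R - 2) * (n%:R - 3))).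
Proof.
move=> a0 ab n4 hs hd hab k i hik.
have n3 : (3 <= n)%N by lia.
have h := offdiag_bound0 a0 ab n3 hs hd hab hik.
have b0 : 0 < bb by apply: lt_le_trans ab.
have N3 : 0 < n%:R - 3 :> R by rewrite subr_gt0 (ltr_nat _ 3 n); lia.
have N2 : 0 < n%:R - 2 :> R by rewrite subr_gt0 (ltr_nat _ 2 n); lia.
have N1 : 0 < n%:R - 1 :> R by rewrite subr_gt0 (ltr_nat _ 1 n); lia.
set q := (n%:R - 3) * (a / ((n%:R - 1) * bb)) in h.
set K := bb / ((n%:R - 1) * (n%:R - 2) * a ^+ 2).
have q0 : 0 < q by rewrite /q; apply: mulr_gt0 => //; apply: divr_gt0 => //; exact: mulr_gt0.
have K0 : 0 < K by apply: divr_gt0 => //; apply: mulr_gt0; [exact: mulr_gt0|exact: exprn_gt0].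
have e1 : bb / ((n%:R - 1) * a) * (a * (n%:R - 2))^-1 * (q + 1) = K * (q + 1).
  rewrite /K; field; rewrite ?lt0r_neq0 //; apply/and3P; split; exact: lt0r_neq0.
have e2 : q * (2 * bb ^+ 2 / (a ^+ 3 * ((n%:R - 2) * (n%:R - 3)))) = 2 * K.
  rewrite /K /q; field; by rewrite !lt0r_neq0.
have q1 : q <= 1.
  rewrite /q mulrA ler_pdivrMr ?mul1r; last exact: mulr_gt0.
  apply: ler_pM; [exact: ltW | exact: ltW | lra | done].
rewrite e1 in h.
suff hh : q * `|invmx V i k| <= q * (2 * bb ^+ 2 / (a ^+ 3 * ((n%:R - 2) * (n%:R - 3)))).
  by rewrite ler_pM2l in hh.
rewrite e2; apply: le_trans h _.
rewrite mulrC ler_pM2r //; lra.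
Qed.
Lemma shift_val r n (i : 'I_(n - r)) : nat_of_ord (shift_ord r n i) = (r + i)%N.
Proof. by []. Qed.

Lemma shift_eq r n (i j : 'I_(n - r)) : (shift_ord r n i == shift_ord r n j) = (i == j).
Proof.
apply/eqP/eqP => [h|->//]; apply/val_inj; move/(congr1 val): h; rewrite /= => h; lia.
Qed.

Lemma shift_surj r n (k : 'I_n) : (r <= k)%N -> exists l, k = shift_ord r n l.
Proof.
move=> hk; have h : (k - r < n - r)%N by have := ltn_ord k; lia.
exists (Ordinal h); apply/val_inj => /=; lia.
Qed.

Definition pad (R : realFieldType) r n (v : 'I_(n - r) -> R) (k : 'I_n) : R :=
  \sum_l (shift_ord r n l == k)%:R * v l.

Lemma pad_sum (R : realFieldType) r n (v : 'I_(n - r) -> R) (F : 'I_n -> R) :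
  \sum_k pad v k * F k = \sum_l v l * F (shift_ord r n l).
Proof.
rewrite /pad; under eq_bigr do rewrite mulr_suml.
rewrite exchange_big /=; apply: eq_bigr => l _.
rewrite -(sum_delta (shift_ord r n l) (fun k => v l * F k)).
by apply: eq_bigr => k _; rewrite -mulrA.
Qed.

Lemma pad_shift (R : realFieldType) r n (v : 'I_(n - r) -> R) l :
  pad v (shift_ord r n l) = v l.
Proof.
rewrite /pad -(sum_delta l v); apply: eq_bigr => l' _; by rewrite shift_eq eq_sym.
Qed.

Lemma pad_lt (R : realFieldType) r n (v : 'I_(n - r) -> R) (k : 'I_n) :
  (k < r)%N -> pad v k = 0.
Proof.
move=> hk; rewrite /pad big1 // => l _.
have -> : (shift_ord r n l == k) = false.
  apply/negbTE/eqP => e; move: hk; rewrite -e shift_val; lia.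
by rewrite mul0r.
Qed.

Lemma unitV22 (R : realFieldType) n r (V : 'M[R]_n) (a bb : R) :
  0 < a -> (3 <= n)%N ->
  (forall i j, V i j = V j i) ->
  (forall i, V i i = \sum_(j | j != i) V i j) ->
  (forall i j, i != j -> a <= V i j <= bb) ->
  br_block r V \in unitmx.
Proof.
move=> a0 n3 hs hd hab.
rewrite unitmxE unitfE; apply/det0P => -[v vn0 hv].
move/negP: vn0; apply; apply/eqP/matrixP => i j; rewrite [RHS]mxE.
rewrite [i]ord1.
set y := pad (fun l => v ord0 l).
have hq : qf V y <= 0.
  rewrite /qf pad_sum big1 // => l _.
  rewrite (eq_bigr (fun m => pad (fun l => v ord0 l) m * V (shift_ord r n l) m)); last first.
    by move=> m _; rewrite mulrC.
  rewrite pad_sum.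
  have := congr1 (fun M : 'M[R]_(1, n - r) => M ord0 l) hv; rewrite !mxE => e.
  have -> : \sum_l0 v ord0 l0 * V (shift_ord r n l) (shift_ord r n l0) = 0.
    apply: etrans e; apply: eq_bigr => l0 _; by rewrite mxE hs.
  by rewrite mulr0.
have := posdef a0 n3 hs hd hab hq (shift_ord r n j).
by rewrite /y pad_shift.
Qed.

Lemma E_bound (R : realFieldType) n r (V : 'M[R]_n) (a bb w : R) :
  0 < a -> (3 <= n)%N -> (r <= n)%N ->
  (forall i j, V i j = V j i) ->
  (forall i, V i i = \sum_(j | j != i) V i j) ->
  (forall i j, i != j -> a <= V i j <= bb) ->
  0 <= w -> 0 <= bb ->
  (forall k i, i != k -> `|invmx V i k| <= w) ->
  forall j' i' : 'I_(n - r),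
  `|(br_block r (invmx V - invdiag V) - (invmx (br_block r V) - invdiag (br_block r V))) j' i'|
    <= w * (2 * r%:R * ((n%:R - 1) * bb) * w).
Proof.
move=> a0 n3 rn hs hd hab w0 bb0 hw j' i'.
have uV := unitV a0 n3 hs hd hab.
have uV22 := unitV22 r a0 n3 hs hd hab.
set P := invmx V; set V22 := br_block r V; set Q := invmx V22.
set si := shift_ord r n i'; set sj := shift_ord r n j'.
set y := pad (fun l => Q l i').
set gt := fun k : 'I_n => if (k < r)%N then \sum_m V k m * y m else 0.
have hVy : forall m, \sum_q V m q * y q = (m == si)%:R + gt m.
  move=> m; rewrite /gt; case: ifP => hm.
    have -> : (m == si) = false.
      by apply/negbTE/eqP => e; move: hm; rewrite e shift_val; lia.
    by rewrite add0r.
  have hm' : (r <= m)%N by rewrite leqNgt hm.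
  have [m' ->] := shift_surj hm'.
  rewrite addr0 shift_eq.
  rewrite (eq_bigr (fun q => y q * V (shift_ord r n m') q)); last by move=> q _; rewrite mulrC.
  rewrite /y pad_sum -(VP m' i' uV22); apply: eq_bigr => l _; by rewrite mxE mulrC.
have hy : forall l, y l = P l si + \sum_m P l m * gt m.
  move=> l.
  have e1 : y l = \sum_q (\sum_m P l m * V m q) * y q.
    rewrite -(sum_delta l y); apply: eq_bigr => q _; by rewrite PV.
  rewrite e1; under eq_bigr do rewrite mulr_suml.
  rewrite exchange_big /=.
  rewrite (eq_bigr (fun m => P l m * ((m == si)%:R + gt m))); last first.
    move=> m _; rewrite -hVy mulr_sumr; apply: eq_bigr => q _; by rewrite mulrA.
  under eq_bigr do rewrite mulrDr.
  rewrite big_split /=; congr (_ + _).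
  rewrite -(sum_delta si (P l)); apply: eq_bigr => m _; by rewrite mulrC eq_sym.
have hE : (br_block r (P - invdiag V) - (Q - invdiag V22)) j' i'
    = - \sum_m P sj m * gt m.
  rewrite !mxE /= -/P -/sj -/si shift_eq.
  have := hy sj; rewrite /y pad_shift => ->.
  lra.
rewrite hE normrN.
have hz : forall k : 'I_n, (k < r)%N -> \sum_m P k m * gt m = - P k si.
  move=> k hk; have := hy k; rewrite /y pad_lt //; lra.
set z := fun l => \sum_m P l m * gt m.
have hVz : forall k : 'I_n, \sum_q V k q * z q = gt k.
  move=> k; rewrite /z.
  under eq_bigr do rewrite mulr_sumr.
  rewrite exchange_big /=.
  rewrite -(sum_delta k gt); apply: eq_bigr => m _.
  by rewrite -(VP k m uV) mulr_suml; apply: eq_bigr => q _; rewrite mulrA.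
have gt0 : forall k : 'I_n, ~~ (k < r)%N -> gt k = 0 by move=> k hk; rewrite /gt (negbTE hk).
have sne : forall k : 'I_n, (k < r)%N -> k != si.
  by move=> k hk; apply/eqP => e; move: hk; rewrite e shift_val; lia.
have sne' : forall k : 'I_n, (k < r)%N -> k != sj.
  by move=> k hk; apply/eqP => e; move: hk; rewrite e shift_val; lia.
set S1 := \sum_(k : 'I_n | (k < r)%N) `|gt k|.
have S10 : 0 <= S1 by apply: sumr_ge0 => k _; exact: normr_ge0.
have hq : qf V z <= w * S1.
  rewrite /qf /S1 mulr_sumr [X in _ <= X]big_mkcond; apply: ler_sum => k _ /=.
  rewrite hVz; case: ifP => hk.
    rewrite /z hz // mulNr; apply: le_trans (ler_norm _) _.
    rewrite normrN normrM; apply: ler_wpM2r; first exact: normr_ge0.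
    by apply: hw; exact: sne.
  by rewrite gt0 ?hk // mulr0.
have hF4 := F4 z (ltW a0) hs hd hab.
rewrite (eq_bigr (fun i => gt i ^+ 2)) in hF4; last by move=> i _; rewrite hVz.
have hS2 : \sum_(k : 'I_n | (k < r)%N) gt k ^+ 2 = \sum_(k : 'I_n) gt k ^+ 2.
  rewrite big_mkcond; apply: eq_bigr => k _; case: ifP => // hk.
  by rewrite gt0 ?hk // expr0n.
have hcs : S1 ^+ 2 <= r%:R * \sum_(k : 'I_n | (k < r)%N) gt k ^+ 2.
  have h1 := @cs_w R _ (fun k : 'I_n => (k < r)%N) (fun _ => 1) (fun k => `|gt k|) (fun _ _ => ler01).
  have e1 : \sum_(k < n | (k < r)%N) (1 : R) = r%:R.
    by rewrite -(big_ord_widen n (fun _ => (1:R)) rn) sumr_const card_ord.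
  move: h1; rewrite e1 /S1.
  under eq_bigr do rewrite mul1r.
  move=> h1; apply: le_trans h1 _; rewrite ler_wpM2l ?ler0n //.
  rewrite le_eqVlt; apply/orP; left; apply/eqP/eq_bigr => k _; by rewrite mul1r real_normK ?num_real.
have hS1 : S1 <= 2 * r%:R * ((n%:R - 1) * bb) * w.
  have h0 : 0 <= r%:R :> R by rewrite ler0n.
  have N1 : 0 <= n%:R - 1 :> R by rewrite subr_ge0 (ler_nat _ 1 n); lia.
  have K0 : 0 <= 2 * ((n%:R - 1) * bb) by rewrite mulr_ge0 // mulr_ge0.
  have h1 : S1 ^+ 2 <= r%:R * (2 * ((n%:R - 1) * bb) * (w * S1)).
    apply: le_trans hcs _; rewrite hS2; apply: ler_wpM2l => //.
    apply: le_trans hF4 _; exact: ler_wpM2l.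
  move: h1; set A := 2 * ((n%:R - 1) * bb).
  have -> : r%:R * (A * (w * S1)) = (2 * r%:R * ((n%:R - 1) * bb) * w) * S1 by rewrite /A; ring.
  move=> h.
  case: (ltrP 0 S1) => hS'.
    by move: h; rewrite expr2 ler_pM2r.
  have -> : S1 = 0 by apply/eqP; rewrite eq_le hS' S10.
  by rewrite mulr_ge0 // mulr_ge0 // mulr_ge0 // mulr_ge0.
have hsum : `|\sum_m P sj m * gt m| <= w * S1.
  apply: le_trans (ler_norm_sum _ _ _) _.
  rewrite /S1 mulr_sumr [X in _ <= X]big_mkcond; apply: ler_sum => m _ /=.
  case: ifP => hm.
    rewrite normrM; apply: ler_wpM2r; first exact: normr_ge0.
    by apply: hw; rewrite eq_sym; exact: sne'.
  by rewrite gt0 ?hm // mulr0 normr0.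
apply: le_trans hsum _; apply: ler_wpM2l => //.
Qed.
Lemma final_ineq (R : realFieldType) (N r b c : R) :
  6 <= N -> 0 <= r -> 0 < c -> c <= b ->
  2 * c^-1 ^+ 2 / (b^-1 ^+ 3 * ((N - 2) * (N - 3))) *
   (2 * r * ((N - 1) * c^-1) * (2 * c^-1 ^+ 2 / (b^-1 ^+ 3 * ((N - 2) * (N - 3)))))
  <= 128 * r * (b ^+ 6 / (N ^+ 3 * c ^+ 5)).
Proof.
move=> N6 r0 c0 cb.
have b0 : 0 < b by apply: lt_le_trans cb.
have N2 : 0 < N - 2 by lra.
have N3 : 0 < N - 3 by lra.
have Np : 0 < N by lra.
set X := r * b ^+ 6 / c ^+ 5.
have X0 : 0 <= X by rewrite /X; apply: divr_ge0; [apply: mulr_ge0 => //; apply: exprn_ge0; exact: ltW | apply: exprn_ge0; exact: ltW].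
have e1 : 2 * c^-1 ^+ 2 / (b^-1 ^+ 3 * ((N - 2) * (N - 3))) *
   (2 * r * ((N - 1) * c^-1) * (2 * c^-1 ^+ 2 / (b^-1 ^+ 3 * ((N - 2) * (N - 3)))))
   = X * (8 * (N - 1) / ((N - 2) ^+ 2 * (N - 3) ^+ 2)).
  rewrite /X; field; rewrite !lt0r_neq0 //.
have e2 : 128 * r * (b ^+ 6 / (N ^+ 3 * c ^+ 5)) = X * (128 / N ^+ 3).
  rewrite /X; field; rewrite !lt0r_neq0 //.
rewrite e1 e2; apply: ler_wpM2l => //.
have d1 : 0 < (N - 2) ^+ 2 * (N - 3) ^+ 2 by apply: mulr_gt0; apply: exprn_gt0.
have d2 : 0 < N ^+ 3 by apply: exprn_gt0.
rewrite ler_pdivrMr // mulrAC ler_pdivlMr //.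
have h1 : N ^+ 2 <= 4 * ((N - 2) * (N - 3)) by nra.
have h2 : N ^+ 4 <= 16 * ((N - 2) * (N - 3)) ^+ 2.
  have h0 : 0 <= N ^+ 2 by apply: exprn_ge0; lra.
  have := ler_pM h0 h0 h1 h1; rewrite -exprD /=.
  move=> h; apply: le_trans h _; rewrite le_eqVlt; apply/orP; left; apply/eqP; ring.
have h3 : (N - 1) * N ^+ 3 <= N ^+ 4.
  have : 0 <= N ^+ 3 by apply: exprn_ge0; lra.
  move=> h; rewrite exprS; apply: ler_wpM2r => //; lra.
have : 8 * (N - 1) * N ^+ 3 <= 128 * ((N - 2) ^+ 2 * (N - 3) ^+ 2).
  have -> : (N - 2) ^+ 2 * (N - 3) ^+ 2 = ((N - 2) * (N - 3)) ^+ 2 by ring.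
  lra.
move=> h; apply: le_trans h; rewrite le_eqVlt; apply/orP; left; apply/eqP; ring.
Qed.

Theorem lemma10 (R : realFieldType) (r : nat) (hr : (0 < r)%N) :
  exists C : R, forall b c : nat -> R,
    (forall n, 0 < c n /\ c n <= b n) ->
    exists N : nat, forall n : nat, (3 <= n)%N -> (N <= n)%N ->
      forall V : 'M[R]_n,
        V^T = V -> inL (b n)^-1 (c n)^-1 V ->
        let W := invmx V - invdiag V in
        let V22 := br_block r V in
        let Wt22 := invmx V22 - invdiag V22 in
        maxnorm (br_block r W - Wt22)
          <= C * (b n ^+ 6 / ((n%:R) ^+ 3 * c n ^+ 5)).
Proof.
exists (128 * r%:R); move=> b c hbc; exists (r + 6)%N; move=> n n3 hn V hT hL.
case: hL => hd hab.
have [c0 cb] := hbc n.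
have b0 : 0 < b n by apply: lt_le_trans cb.
set a := (b n)^-1; set bb := (c n)^-1.
have a0 : 0 < a by rewrite invr_gt0.
have bb0 : 0 < bb by rewrite invr_gt0.
have ab : a <= bb by rewrite /a /bb lef_pV2 ?posrE.
have hs : forall i j, V i j = V j i.
  by move=> i j; rewrite -{1}hT mxE.
have n4 : (4 <= n)%N by lia.
have rn : (r <= n)%N by lia.
set w := 2 * bb ^+ 2 / (a ^+ 3 * ((n%:R - 2) * (n%:R - 3))).
have N3 : 0 < n%:R - 3 :> R by rewrite subr_gt0 (ltr_nat _ 3 n); lia.
have N2 : 0 < n%:R - 2 :> R by rewrite subr_gt0 (ltr_nat _ 2 n); lia.
have w0 : 0 <= w.
  rewrite /w; apply: divr_ge0; first by rewrite mulr_ge0 // exprn_ge0 // ltW.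
  by rewrite mulr_ge0 ?exprn_ge0 ?ltW // mulr_gt0.
have hw := offdiag_bound a0 ab n4 hs hd hab.
have hE := E_bound (r:=r) a0 (ltnW n4) rn hs hd hab w0 (ltW bb0) hw.
have fin : w * (2 * r%:R * ((n%:R - 1) * bb) * w) <= 128 * r%:R * (b n ^+ 6 / (n%:R ^+ 3 * c n ^+ 5)).
  apply: final_ineq => //; rewrite ?ler0n //.
  by rewrite (ler_nat _ 6 n); lia.
rewrite /maxnorm; apply: bigmax_le.
  by apply: le_trans fin; rewrite mulr_ge0 // mulr_ge0 // mulr_ge0 // ?mulr_ge0 ?ler0n ?subr_ge0 ?ltW //; lra.
move=> i _; apply: bigmax_le.
  by apply: le_trans fin; rewrite mulr_ge0 // mulr_ge0 // mulr_ge0 // ?mulr_ge0 ?ler0n ?subr_ge0 ?ltW //; lra.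
move=> j _; apply: le_trans fin; exact: hE.
Qed.
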